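(* Let $p,q\ge1$, $J\subseteq[p-1]$, $K\subseteq[q-1]$ and $R\subseteq[p+q-1]$. For $\zeta\in\mathfrak{S}^{(p,q)}$ define $r_\zeta\colon\mathcal{Q}_p\times\mathcal{Q}_q\to\mathcal{Q}_{p+q}$ by $r_\zeta(J',K')=\mathrm{Des}\big((\zeta_{J'}\times\zeta_{K'})\cdot\zeta^{-1}\big)$. Then the coefficient of $M_{R,p+q}$ in the product $M_{J,p}\cdot M_{K,q}$ equals the number of $\zeta\in\mathfrak{S}^{(p,q)}$ such that the set $\{(J',K')\in\mathcal{Q}_p\times\mathcal{Q}_q: r_\zeta(J',K')\subseteq R\}$ has a greatest element with respect to componentwise inclusion and this greatest element is $(J,K)$.
   Context: $\mathcal{Q}_n$ denotes the set of subsets of $[n-1]$ ordered by inclusion. Permutations in one-line notation, product is composition. $\mathrm{Des}(x)=\{i:x_i>x_{i+1}\}$. For $x\in\mathfrak{S}_p,y\in\mathfrak{S}_q$, $x\times y\in\mathfrak{S}_{p+q}$ has $(x\times y)(i)=x_i$ ($i\le p$), $(x\times y)(p+j)=p+y_j$. $\mathfrak{S}^{(p,q)}=\{\zeta\in\mathfrak{S}_{p+q}:\zeta_1<\cdots<\zeta_p,\zeta_{p+1}<\cdots<\zeta_{p+q}\}$. For $J=\{p_1<\cdots<p_k\}\subseteq[n-1]$, $\zeta_J=(n{-}p_1{+}1,\ldots,n,\ n{-}p_2{+}1,\ldots,n{-}p_1,\ldots,1,\ldots,n{-}p_k)\in\mathfrak{S}_n$, $\zeta_\emptyset=1_n$.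 For $J=\{j_1<\cdots<j_{k-1}\}\subseteq[n-1]$ with composition $\alpha=(j_1,j_2-j_1,\ldots,n-j_{k-1})$, $M_{J,n}=\sum_{i_1<\cdots<i_k}x_{i_1}^{\alpha_1}\cdots x_{i_k}^{\alpha_k}$ is the monomial quasi-symmetric function (commuting variables $x_1,x_2,\ldots$); products are products of formal power series. *)

(* Defs.v *)
From HB Require Import structures.
From mathcomp Require Import all_boot all_order all_algebra all_fingroup.
From mathcomp Require Import mpoly.

Set Implicit Arguments.
Unset Strict Implicit.
Unset Printing Implicit Defensive.

Import GRing.Theory.
Local Open Scope ring_scope.

(* Conventions:
   - A subset of [n-1] is represented as  A : {set 'I_n.-1}, where the
     element i : 'I_n.-1 stands for the integer i+1 in [n-1].
   - Positions / values of permutations in 'S_n (and of one-line words) are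
     0-indexed: position i (0-indexed) is position i+1 (1-indexed). *)

Lemma ltn_predS_ord n (i : 'I_n.-1) : (i.+1 < n)%N.
Proof. by case: n i => [[]|n] i //=; rewrite ltnS. Qed.

Definition pos_hi n (i : 'I_n.-1) : 'I_n := Ordinal (ltn_predS_ord i).
Definition pos_lo n (i : 'I_n.-1) : 'I_n := Ordinal (ltnW (ltn_predS_ord i)).

Definition Des n (x : 'I_n -> nat) : {set 'I_n.-1} :=
  [set i : 'I_n.-1 | (x (pos_hi i) < x (pos_lo i))%N].

(* zeta_J in S_n, in 0-indexed one-line notation (values 0..n-1):
   for J = {p_1 < ... < p_k}, position i (0-indexed) lying in the block
   p_{b-1} < i+1 <= p_b (p_0 = 0, p_{k+1} = n) is sent to
   n - p_b + (i - p_{b-1}) (0-indexed value). *)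
Definition zetaJ n (J : {set 'I_n.-1}) (i : nat) : nat :=
  let prev := (\max_(j in J | (j.+1 <= i)%N) j.+1)%N in
  let nmnext := (\max_(j in J | (i < j.+1)%N) (n - j.+1))%N in
  (nmnext + i - prev)%N.

Definition crossw (p : nat) (x y : nat -> nat) (i : nat) : nat :=
  if (i < p)%N then x i else (p + y (i - p))%N.

Definition shuffle_perm p q (z : 'S_(p + q)) : bool :=
  [forall i : 'I_(p + q).-1,
     (i.+1 != p) ==> (val (z (pos_lo i)) < val (z (pos_hi i)))%N].

Definition r_zeta p q (z : 'S_(p + q)) (J' : {set 'I_p.-1}) (K' : {set 'I_q.-1})
  : {set 'I_(p + q).-1} :=
  Des (fun i : 'I_(p + q) => crossw p (zetaJ J') (zetaJ K') (val ((z^-1)%g i))).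

Definition greatest_is p q (z : 'S_(p + q)) (R : {set 'I_(p + q).-1})
  (J : {set 'I_p.-1}) (K : {set 'I_q.-1}) : bool :=
  (r_zeta z J K \subset R) &&
  [forall J' : {set 'I_p.-1}, forall K' : {set 'I_q.-1},
     (r_zeta z J' K' \subset R) ==> (J' \subset J) && (K' \subset K)].

Definition count_zeta p q (J : {set 'I_p.-1}) (K : {set 'I_q.-1})
  (R : {set 'I_(p + q).-1}) : nat :=
  #|[set z : 'S_(p + q) | shuffle_perm z && greatest_is z R J K]|.

Definition compo n (J : {set 'I_n.-1}) : seq nat :=
  pairmap (fun a b => (b - a)%N) 0%N
    (rcons (sort leq [seq (val j).+1 | j <- enum J]) n).

(* M_{J,n} truncated to the variables x_1, ..., x_N (x_{i+1} = 'X_i):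
   sum over i_1 < ... < i_k of x_{i_1}^{a_1} ... x_{i_k}^{a_k}.
   (enum I lists the elements of I : {set 'I_N} in increasing order.) *)
Definition Mqsym (N n : nat) (J : {set 'I_n.-1}) : {mpoly int[N]} :=
  let a := compo J in
  \sum_(I : {set 'I_N} | #|I| == size a)
     \prod_(x <- zip (enum I) a) 'X_x.1 ^+ x.2.

(* Main.v *)
Require Import Defs.
From HB Require Import structures.
From mathcomp Require Import all_boot all_order all_algebra all_fingroup.
From mathcomp Require Import mpoly.
From mathcomp Require Import zify.

Set Implicit Arguments.
Unset Strict Implicit.
Unset Printing Implicit Defensive.


Lemma prev_le n (J : {set 'I_n.-1}) i :
  (\max_(j in J | (j.+1 <= i)%N) j.+1 <= i)%N.
Proof. by apply/bigmax_leqP => j /andP[]. Qed.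

Lemma nm_le n (J : {set 'I_n.-1}) i :
  (\max_(j in J | (i < j.+1)%N) (n - j.+1) <= n - i.+1)%N.
Proof. apply/bigmax_leqP => j /andP[_ h]; apply: leq_sub2l; exact: h. Qed.

Lemma zetaJ_lt n (J : {set 'I_n.-1}) i : (i < n)%N -> (zetaJ J i < n)%N.
Proof.
move=> hi; rewrite /zetaJ.
have := nm_le J i; have := prev_le J i. lia.
Qed.

Lemma zetaJ_des n (J : {set 'I_n.-1}) (j : 'I_n.-1) :
  (zetaJ J j.+1 < zetaJ J j)%N = (j \in J).
Proof.
have hj : (j.+1 < n)%N by case: n J j => [|n] J [j hj] //=; rewrite ltnS.
rewrite /zetaJ.
case: (boolP (j \in J)) => jJ.
- have e1 : (\max_(k in J | (k.+1 <= j.+1)%N) k.+1)%N = j.+1.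
    apply/eqP; rewrite eqn_leq prev_le /=.
    by apply: (bigmax_sup j) => //; rewrite jJ leqnn.
  have h2 := nm_le J j.+1.
  have h3 : (n - j.+1 <= \max_(k in J | (j < k.+1)%N) (n - k.+1))%N.
    by apply: (bigmax_sup j) => //; rewrite jJ ltnSn.
  have h4 := prev_le J j.
  rewrite e1. lia.
- have e1 : (\max_(k in J | (k.+1 <= j.+1)%N) k.+1)%N = (\max_(k in J | (k.+1 <= j)%N) k.+1)%N.
    apply: eq_bigl => k; case: (boolP (k \in J)) => //= kJ.
    have : (k : nat) != j by apply/eqP => /val_inj ek; rewrite -ek kJ in jJ.
    lia.
  have e2 : (\max_(k in J | (j.+1 < k.+1)%N) (n - k.+1))%N = (\max_(k in J | (j < k.+1)%N) (n - k.+1))%N.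
    apply: eq_bigl => k; case: (boolP (k \in J)) => //= kJ.
    have : (k : nat) != j by apply/eqP => /val_inj ek; rewrite -ek kJ in jJ.
    lia.
  rewrite e1 e2; have h4 := prev_le J j. apply/negbTE. lia.
Qed.


Definition mono n N (g : {ffun 'I_n -> 'I_N}) :=
  [forall x : 'I_n, forall y : 'I_n, (x <= y)%N ==> (g x <= g y)%N].
Definition cutsf n N (g : {ffun 'I_n -> 'I_N}) : {set 'I_n.-1} :=
  [set i | (g (pos_lo i) < g (pos_hi i))%N].

Lemma monoP n N (g : {ffun 'I_n -> 'I_N}) : mono g -> forall x y : 'I_n, (x <= y)%N -> (g x <= g y)%N.
Proof. by move=> /forallP h x y xy; have /forallP/(_ y)/implyP := h x; apply. Qed.

Lemma mk_gap n (x : 'I_n) : (x.+1 < n)%N -> {i : 'I_n.-1 | pos_lo i = x & val (pos_hi i) = x.+1}.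
Proof.
move=> h; have h' : (x < n.-1)%N by lia.
by exists (Ordinal h'); [apply: val_inj|].
Qed.

Lemma gap_eq n (i i' : 'I_n.-1) : pos_lo i = pos_lo i' -> i = i'.
Proof. by move=> /(congr1 val) /= e; apply: val_inj. Qed.

Definition isA p q (z : 'S_(p + q)) (x : 'I_(p + q)) := (val ((z^-1)%g x) < p)%N.
Definition Dz p q (z : 'S_(p + q)) (i : 'I_(p + q).-1) :=
  ~~ isA z (pos_lo i) && isA z (pos_hi i).
Definition TA p q (z : 'S_(p + q)) (R : {set 'I_(p + q).-1}) (j : 'I_p.-1) :=
  [forall i : 'I_(p + q).-1, ((pos_lo i == z (lshift q (pos_lo j))) &&
     (pos_hi i == z (lshift q (pos_hi j)))) ==> (i \in R)].
Definition TB p q (z : 'S_(p + q)) (R : {set 'I_(p + q).-1}) (k : 'I_q.-1) :=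
  [forall i : 'I_(p + q).-1, ((pos_lo i == z (rshift p (pos_lo k))) &&
     (pos_hi i == z (rshift p (pos_hi k)))) ==> (i \in R)].

Lemma SI1 p q (z : 'S_(p + q)) : shuffle_perm z -> forall a b : 'I_(p + q),
  (b : nat) = a.+1 -> (b < p)%N || (p <= a)%N -> (z a < z b)%N.
Proof.
move=> /forallP sh a b eb hb.
have [i ei1 ei2] := @mk_gap _ a (ltac:(rewrite -eb; exact: ltn_ord b)).
have ib : pos_hi i = b by apply: val_inj; rewrite ei2 -eb.
have /implyP := sh i; rewrite ei1 ib; apply.
have : (i : nat) = a by rewrite -ei1.
move: hb; rewrite eb => hb hia. lia.
Qed.

Lemma SI p q (z : 'S_(p + q)) : shuffle_perm z -> forall a b : 'I_(p + q),
  (a < b)%N -> (b < p)%N || (p <= a)%N -> (z a < z b)%N.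
Proof.
move=> sh; suff H : forall d (a b : 'I_(p + q)), (b : nat) = (a + d.+1)%N ->
  (b < p)%N || (p <= a)%N -> (z a < z b)%N.
  move=> a b ab; apply: (H (b - a.+1)%N); lia.
elim=> [|d IH] a b eb hb; first by apply: SI1 => //; lia.
have hc : (a.+1 < p + q)%N by have := ltn_ord b; lia.
pose c := Ordinal hc.
apply: (@ltn_trans (z c)); first by apply: SI1 => //; move: hb; rewrite /= eb; lia.
by apply: IH => /=; [lia | move: hb; rewrite eb; lia].
Qed.

Lemma SIle p q (z : 'S_(p + q)) : shuffle_perm z -> forall a b : 'I_(p + q),
  (a <= b)%N -> (b < p)%N || (p <= a)%N -> (z a <= z b)%N.
Proof.
move=> sh a b; rewrite leq_eqVlt => /orP[/eqP/val_inj -> //|ab] h.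
by apply: ltnW; apply: SI.
Qed.

Lemma SIr p q (z : 'S_(p + q)) : shuffle_perm z -> forall a b : 'I_(p + q),
  (a < p)%N = (b < p)%N -> (z a < z b)%N = (a < b)%N.
Proof.
move=> sh a b e; apply/idP/idP => h; last by apply: SI => //; lia.
rewrite ltnNge; apply/negP => ba.
have c : (a < p)%N || (p <= b)%N by lia.
by have := SIle sh ba c; rewrite leqNgt h.
Qed.

Lemma adj p q (z : 'S_(p + q)) : shuffle_perm z -> forall u v : 'I_(p + q),
  (u < p)%N = (v < p)%N -> (z v : nat) = (z u).+1 -> (v : nat) = u.+1.
Proof.
move=> sh u v e ev.
have uv : (u < v)%N by rewrite -(SIr sh) // ev.
case: (ltngtP v u.+1) => // h; [lia|].
have hc : (u.+1 < p + q)%N by have := ltn_ord v; lia.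
pose c := Ordinal hc.
have h1 : (z u < z c)%N by rewrite (SIr sh) /=; [lia | by move: e; case: (ltnP u p); case: (ltnP v p); lia].
have h2 : (z c < z v)%N by rewrite (SIr sh) /=; [lia | by move: e; case: (ltnP u p); case: (ltnP v p); lia].
lia.
Qed.


Lemma Lbl p q N (z : 'S_(p + q)) (g : {ffun 'I_(p + q) -> 'I_N}) :
  mono g -> (forall i, Dz z i -> i \in cutsf g) ->
  forall x y : 'I_(p + q), ~~ isA z x -> isA z y -> (x < y)%N -> (g x < g y)%N.
Proof.
move=> mg hD; suff H : forall d (x y : 'I_(p + q)), (y : nat) = (x + d.+1)%N ->
   ~~ isA z x -> isA z y -> (g x < g y)%N.
  move=> x y hx hy xy; apply: (H (y - x.+1)%N) => //; lia.
elim=> [|d IH] x y ey hx hy.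
  have [i ei1 ei2] := @mk_gap _ x (ltac:(have := ltn_ord y; lia)).
  have ib : pos_hi i = y by apply: val_inj; move: ei2 => /=; lia.
  have := hD i; rewrite /Dz ei1 ib hx hy inE ei1 ib; by apply.
have hc : (x.+1 < p + q)%N by have := ltn_ord y; lia.
pose c := Ordinal hc.
have [i ei1 ei2] := @mk_gap _ x hc.
have ic : pos_hi i = c by apply: val_inj; rewrite ei2.
have gcy : (g c <= g y)%N by apply: monoP => //=; lia.
case: (boolP (isA z c)) => hcA.
  have := hD i; rewrite /Dz ei1 ic hx hcA inE ei1 ic => /(_ isT) h; lia.
have := IH c y; rewrite /= ey => /(_ (ltac:(lia)) hcA hy) h.
have : (g x <= g c)%N by apply: monoP => /=; lia.
lia.
Qed.

Definition wz p q (z : 'S_(p + q)) (J' : {set 'I_p.-1}) (K' : {set 'I_q.-1}) (x : 'I_(p + q)) :=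
  crossw p (zetaJ J') (zetaJ K') (val ((z^-1)%g x)).

Lemma rz_in p q (z : 'S_(p + q)) J' K' i :
  (i \in r_zeta z J' K') = (wz z J' K' (pos_hi i) < wz z J' K' (pos_lo i))%N.
Proof. by rewrite /r_zeta /Des inE. Qed.

Lemma wzA p q (z : 'S_(p + q)) J' K' x : isA z x -> wz z J' K' x = zetaJ J' (val ((z^-1)%g x)).
Proof. by rewrite /isA /wz /crossw => ->. Qed.

Lemma wzB p q (z : 'S_(p + q)) J' K' x : ~~ isA z x ->
  wz z J' K' x = (p + zetaJ K' (val ((z^-1)%g x) - p))%N.
Proof. by rewrite /isA /wz /crossw => /negbTE ->. Qed.

Lemma wzA_lt p q (z : 'S_(p + q)) J' K' x : isA z x -> (wz z J' K' x < p)%N.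
Proof. by move=> h; rewrite wzA //; apply: zetaJ_lt. Qed.

Lemma Rchar p q (z : 'S_(p + q)) (J' : {set 'I_p.-1}) (K' : {set 'I_q.-1}) (R : {set 'I_(p + q).-1}) : shuffle_perm z ->
  (r_zeta z J' K' \subset R) =
  [&& [forall i, Dz z i ==> (i \in R)],
      J' \subset [set j | TA z R j] & K' \subset [set k | TB z R k]].
Proof.
move=> sh; apply/idP/idP.
- move=> /subsetP sub; apply/and3P; split.
  + apply/forallP => i; apply/implyP => /andP[hl hh]; apply: sub.
    rewrite rz_in [wz _ _ _ (pos_lo i)]wzB //.
    have := wzA_lt J' K' hh; lia.
  + apply/subsetP => j jJ; rewrite inE; apply/forallP => i; apply/implyP => /andP[/eqP e1 /eqP e2].
    apply: sub; rewrite rz_in e1 e2 !wzA /isA ?permK //=; last first.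
      by have := ltn_ord (pos_hi j).
      by have := ltn_ord (pos_lo j).
    by rewrite zetaJ_des.
  + apply/subsetP => k kK; rewrite inE; apply/forallP => i; apply/implyP => /andP[/eqP e1 /eqP e2].
    apply: sub; rewrite rz_in e1 e2 !wzB /isA ?permK /=; try lia.
    rewrite ltn_add2l !addKn; by rewrite zetaJ_des.
- move=> /and3P[/forallP hD /subsetP sJ /subsetP sK]; apply/subsetP => i.
  rewrite rz_in => des.
  set u := (z^-1)%g (pos_lo i); set v := (z^-1)%g (pos_hi i).
  have zu : z u = pos_lo i by rewrite /u permKV.
  have zv : z v = pos_hi i by rewrite /v permKV.
  have ezv : (z v : nat) = (z u).+1 by rewrite zu zv.
  case: (boolP (isA z (pos_lo i))) => hl; case: (boolP (isA z (pos_hi i))) => hh.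
  + have hu : (u < p)%N by exact: hl.
    have hv : (v < p)%N by exact: hh.
    have ev := @adj _ _ _ sh u v (ltac:(by rewrite hu hv)) ezv.
    have hj : (u < p.-1)%N by lia.
    pose j := (Ordinal hj).
    have jJ : j \in J'.
      have ev' : val v = u.+1 := ev.
      rewrite -zetaJ_des /=; move: des; rewrite !wzA // -/u -/v ev' => h; exact: h.
    have := sJ j jJ; rewrite inE => /forallP/(_ i)/implyP; apply; apply/andP; split.
      by rewrite -zu; apply/eqP; congr (z _); apply: val_inj.
      by rewrite -zv; apply/eqP; congr (z _); apply: val_inj => /=; rewrite ev.
  + move: des; rewrite wzB // ; have := wzA_lt J' K' hl; lia.
  + by apply/(implyP (hD i)); rewrite /Dz hl hh.
  + have hu : (u < p)%N = false by exact: negbTE hl.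
    have hv : (v < p)%N = false by exact: negbTE hh.
    have ev := @adj _ _ _ sh u v (ltac:(by rewrite hu hv)) ezv.
    have hk : (u - p < q.-1)%N by have := ltn_ord v; lia.
    pose k := (Ordinal hk).
    have kK : k \in K'.
      have ev' : (val v - p = (u - p).+1)%N by rewrite /= ev; lia.
      rewrite -zetaJ_des /=; move: des; rewrite !wzB // -/u -/v ev' ltn_add2l => h; exact: h.
    have := sK k kK; rewrite inE => /forallP/(_ i)/implyP; apply; apply/andP; split.
      by rewrite -zu; apply/eqP; congr (z _); apply: val_inj => /=; lia.
      by rewrite -zv; apply/eqP; congr (z _); apply: val_inj => /=; lia.
Qed.


Lemma Gr p q (z : 'S_(p + q)) (R : {set 'I_(p + q).-1}) (J : {set 'I_p.-1}) (K : {set 'I_q.-1}) :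
  shuffle_perm z ->
  greatest_is z R J K = [&& [forall i, Dz z i ==> (i \in R)],
      J == [set j | TA z R j] & K == [set k | TB z R k]].
Proof.
move=> sh; rewrite /greatest_is Rchar //; apply/idP/idP.
- case/andP => /and3P[hD sJ sK] /forallP H.
  have := H [set j | TA z R j]; move/forallP/(_ [set k | TB z R k]).
  rewrite Rchar // hD !subxx /= => /andP[s1 s2].
  by rewrite !eqEsubset sJ sK s1 s2.
- case/and3P => hD /eqP eJ /eqP eK.
rewrite hD eJ eK !subxx /=.
  apply/forallP => J'; apply/forallP => K'; rewrite Rchar // hD /=; by apply/implyP.
Qed.

Lemma TA_adj p q N (z : 'S_(p + q)) (g : {ffun 'I_(p + q) -> 'I_N}) (a b : 'I_(p + q)) :
  (b : nat) = a.+1 ->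
  [forall i : 'I_(p + q).-1, ((pos_lo i == a) && (pos_hi i == b)) ==> (i \in cutsf g)]
  = (g a < g b)%N.
Proof.
move=> eb; have [i ei1 ei2] := @mk_gap _ a (ltac:(have := ltn_ord b; lia)).
have ib : pos_hi i = b by apply: val_inj; move: ei2 => /=; lia.
apply/forallP/idP.
- by move/(_ i); rewrite ei1 ib !eqxx inE ei1 ib.
- move=> h i'; apply/implyP => /andP[/eqP e1 _].
  by rewrite (@gap_eq _ i' i) ?ei1 // inE ei1 ib.
Qed.

Lemma TA_nadj p q N (z : 'S_(p + q)) (g : {ffun 'I_(p + q) -> 'I_N}) (a b : 'I_(p + q)) :
  (a.+1 < b)%N ->
  [forall i : 'I_(p + q).-1, ((pos_lo i == a) && (pos_hi i == b)) ==> (i \in cutsf g)].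
Proof.
move=> ab; apply/forallP => i; apply/implyP => /andP[/eqP e1 /eqP e2].
by move: ab; rewrite -e1 -e2 /= ltnn.
Qed.

Lemma GJA p q N (z : 'S_(p + q)) (g : {ffun 'I_(p + q) -> 'I_N}) (j : 'I_p.-1) :
  shuffle_perm z -> mono g -> (forall i, Dz z i -> i \in cutsf g) ->
  TA z (cutsf g) j = (g (z (lshift q (pos_lo j))) < g (z (lshift q (pos_hi j))))%N.
Proof.
move=> sh mg hD; rewrite /TA.
set a := z (lshift q (pos_lo j)); set b := z (lshift q (pos_hi j)).
have hj : (j.+1 < p)%N by exact: ltn_ord (pos_hi j).
have ab : (a < b)%N by apply: SI => //=; lia.
case: (ltngtP (b : nat) a.+1) => h; first lia.
- rewrite TA_nadj //; symmetry.
  have hx : (a.+1 < p + q)%N by have := ltn_ord b; lia.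
  pose x := Ordinal hx.
  have nA : ~~ isA z x.
    apply/negP => hA; set c := (z^-1)%g x.
    have hc : (c < p)%N by exact: hA.
    have zc : z c = x by rewrite /c permKV.
    have h1 := @SIr _ _ _ sh (lshift q (pos_lo j)) c (ltac:(rewrite /= hc; lia)).
    have h2 := @SIr _ _ _ sh c (lshift q (pos_hi j)) (ltac:(rewrite /= hc; lia)).
    rewrite -/a -/b zc /= ltnSn in h1; rewrite -/b zc /= h in h2.
    lia.
  have hb : isA z b by rewrite /isA /b permK /=.
  have := @Lbl _ _ _ z g mg hD x b nA hb (ltac:(rewrite /=; lia)).
  have : (g a <= g x)%N by apply: monoP => //=.
  lia.
- exact: TA_adj.
Qed.

Lemma GJB p q N (z : 'S_(p + q)) (g : {ffun 'I_(p + q) -> 'I_N}) (k : 'I_q.-1) :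
  shuffle_perm z -> mono g -> (forall i, Dz z i -> i \in cutsf g) ->
  TB z (cutsf g) k = (g (z (rshift p (pos_lo k))) < g (z (rshift p (pos_hi k))))%N.
Proof.
move=> sh mg hD; rewrite /TB.
set a := z (rshift p (pos_lo k)); set b := z (rshift p (pos_hi k)).
have hk : (k.+1 < q)%N by exact: ltn_ord (pos_hi k).
have ab : (a < b)%N by apply: SI => //=; lia.
case: (ltngtP (b : nat) a.+1) => h; first lia.
- rewrite TA_nadj //; symmetry.
  have hx : (a.+1 < p + q)%N by have := ltn_ord b; lia.
  pose x := Ordinal hx.
  have yA : isA z x.
    apply/negPn/negP => hA; set c := (z^-1)%g x.
    have hc : (p <= c)%N by rewrite leqNgt; exact: hA.
    have zc : z c = x by rewrite /c permKV.
    have h1 := @SIr _ _ _ sh (rshift p (pos_lo k)) c (ltac:(rewrite /=; lia)).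
    have h2 := @SIr _ _ _ sh c (rshift p (pos_hi k)) (ltac:(rewrite /=; lia)).
    rewrite -/a -/b zc /= ltnSn in h1; rewrite -/b zc /= h in h2.
    lia.
  have [i ei1 ei2] := @mk_gap _ a hx.
  have ix : pos_hi i = x by apply: val_inj; move: ei2 => /=; lia.
  have nA : ~~ isA z a by rewrite /isA /a permK /= -leqNgt leq_addr.
  have := hD i; rewrite /Dz ei1 ix nA yA inE ei1 ix => /(_ isT).
  have : (g x <= g b)%N by apply: monoP => /=; lia.
  lia.
- exact: TA_adj.
Qed.


Lemma sumI n lo hi : (hi <= n)%N -> (\sum_(x < n) ((lo <= x) && (x < hi)) = hi - lo)%N.
Proof.
elim: n hi => [|n IH] hi hn; first by rewrite big_ord0; lia.
rewrite big_ord_recr /=.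
case: (ltnP hi n.+1) => h.
  rewrite IH; last lia.
  by rewrite andbF addn0.
have -> : hi = n.+1 by lia.
rewrite (eq_bigr (fun x : 'I_n => nat_of_bool ((lo <= x) && (x < n)))) => [|x _].
  by rewrite IH // andbT; case: leqP => h' /=; lia.
by rewrite ltnS (ltnW (ltn_ord x)) ltn_ord.
Qed.

Lemma cardI n lo hi : (hi <= n)%N -> #|[set x : 'I_n | (lo <= x) && (x < hi)]| = (hi - lo)%N.
Proof.
move=> h; rewrite -sum1dep_card big_mkcond /= -(sumI lo h).
by apply: eq_bigr => x _; case: ifP.
Qed.

Definition lexo n (s : 'I_n -> nat) (i j : 'I_n) :=
  (s i < s j)%N || ((s i == s j) && (i < j)%N).

Definition rank n (s : 'I_n -> nat) (i : 'I_n) := #|[set k | lexo s k i]|.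

Lemma lexo_irr n (s : 'I_n -> nat) i : lexo s i i = false.
Proof. by rewrite /lexo !ltnn andbF. Qed.

Lemma lexo_trans n (s : 'I_n -> nat) i j k : lexo s i j -> lexo s j k -> lexo s i k.
Proof.
rewrite /lexo => /orP[h1|/andP[/eqP h1 h1']] /orP[h2|/andP[/eqP h2 h2']]; apply/orP; lia.
Qed.

Lemma lexo_total n (s : 'I_n -> nat) i j : i != j -> lexo s i j || lexo s j i.
Proof.
move=> ne; have : (i : nat) != j by apply: contra ne => /eqP /val_inj ->.
rewrite /lexo; lia.
Qed.

Lemma rank_lt n (s : 'I_n -> nat) i : (rank s i < n)%N.
Proof.
have hp : [set k | lexo s k i] \proper [set: 'I_n].
  by rewrite properT; apply/eqP => /setP/(_ i); rewrite !inE lexo_irr.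
by have := proper_card hp; rewrite cardsT card_ord.
Qed.

Lemma rank_mono n (s : 'I_n -> nat) i j : lexo s i j -> (rank s i < rank s j)%N.
Proof.
move=> h; apply: proper_card; apply/properP; split.
  by apply/subsetP => k; rewrite !inE => hk; apply: lexo_trans hk h.
by exists i; rewrite !inE ?lexo_irr.
Qed.

Lemma rankE n (s : 'I_n -> nat) i j : (rank s i < rank s j)%N = lexo s i j.
Proof.
apply/idP/idP; last exact: rank_mono.
move=> h; case: (eqVneq i j) => [e|ne]; first by move: h; rewrite e ltnn.
have := lexo_total s ne; case/orP => // h'.
by have := rank_mono h'; lia.
Qed.

Definition rankO n (s : 'I_n -> nat) i : 'I_n := Ordinal (rank_lt s i).

Lemma rank_inj n (s : 'I_n -> nat) : injective (rankO s).
Proof.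
move=> i j /(congr1 val) /= e; apply/eqP; apply/negPn/negP => ne.
by have := lexo_total s ne; rewrite -!rankE e ltnn.
Qed.

Definition rperm n (s : 'I_n -> nat) : 'S_n := perm (@rank_inj n s).

Lemma rpermE n (s : 'I_n -> nat) i : (rperm s i : nat) = rank s i.
Proof. by rewrite permE. Qed.

Lemma rperm_lt n (s : 'I_n -> nat) i j : (rperm s i < rperm s j)%N = lexo s i j.
Proof. by rewrite !rpermE rankE. Qed.

Definition sI p q N (u : {ffun 'I_p -> 'I_N} * {ffun 'I_q -> 'I_N}) (i : 'I_(p + q)) : 'I_N :=
  match split i with inl a => u.1 a | inr b => u.2 b end.
Definition sN p q N (u : {ffun 'I_p -> 'I_N} * {ffun 'I_q -> 'I_N}) (i : 'I_(p + q)) : nat :=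
  val (sI u i).

Lemma sI_l p q N (u : {ffun 'I_p -> 'I_N} * {ffun 'I_q -> 'I_N}) a : sI u (lshift q a) = u.1 a.
Proof. by rewrite /sI -[lshift q a]/(unsplit (inl a)) unsplitK. Qed.
Lemma sI_r p q N (u : {ffun 'I_p -> 'I_N} * {ffun 'I_q -> 'I_N}) b : sI u (rshift p b) = u.2 b.
Proof. by rewrite /sI -[rshift p b]/(unsplit (inr b)) unsplitK. Qed.

Definition Phi p q N (v : {ffun 'I_(p + q) -> 'I_N} * 'S_(p + q)) :
  {ffun 'I_p -> 'I_N} * {ffun 'I_q -> 'I_N} :=
  ([ffun a => v.1 (v.2 (lshift q a))], [ffun b => v.1 (v.2 (rshift p b))]).

Definition Theta p q N (u : {ffun 'I_p -> 'I_N} * {ffun 'I_q -> 'I_N}) :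
  {ffun 'I_(p + q) -> 'I_N} * 'S_(p + q) :=
  ([ffun x => sI u ((rperm (sN u))^-1 x)%g], rperm (sN u)).

Definition Pset p q N (J : {set 'I_p.-1}) (K : {set 'I_q.-1})
  (u : {ffun 'I_p -> 'I_N} * {ffun 'I_q -> 'I_N}) :=
  [&& mono u.1, cutsf u.1 == J, mono u.2 & cutsf u.2 == K].

Definition Qset p q N (J : {set 'I_p.-1}) (K : {set 'I_q.-1})
  (v : {ffun 'I_(p + q) -> 'I_N} * 'S_(p + q)) :=
  [&& mono v.1, shuffle_perm v.2 & greatest_is v.2 (cutsf v.1) J K].

Lemma F1 p q N (u : {ffun 'I_p -> 'I_N} * {ffun 'I_q -> 'I_N}) : Phi (Theta u) = u.
Proof.
case: u => u1 u2; rewrite /Phi /Theta /=; congr pair; apply/ffunP => a;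
by rewrite !ffunE permK ?sI_l ?sI_r.
Qed.

Lemma sI_Phi p q N (v : {ffun 'I_(p + q) -> 'I_N} * 'S_(p + q)) i :
  sI (Phi v) i = v.1 (v.2 i).
Proof. by rewrite /sI; case: (split i) (splitK i) => [a|b] /= <-; rewrite ffunE. Qed.


Lemma F3 p q N (J : {set 'I_p.-1}) (K : {set 'I_q.-1}) v :
  Qset J K v -> Pset J K (@Phi p q N v).
Proof.
case: v => g z; rewrite /Qset /Pset /= => /and3P[mg sh].
rewrite Gr // => /and3P[/forallP hD /eqP eJ /eqP eK].
have hD' : forall i, Dz z i -> i \in cutsf g := fun i h => implyP (hD i) h.
apply/and4P; split.
- apply/forallP => a; apply/forallP => b; apply/implyP => ab; rewrite !ffunE.
  by apply: monoP => //; apply: SIle => //=; rewrite ltn_ord.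
- by rewrite eJ; apply/eqP/setP => j; rewrite !inE GJA // !ffunE.
- apply/forallP => a; apply/forallP => b; apply/implyP => ab; rewrite !ffunE.
  by apply: monoP => //; apply: SIle => //=; [rewrite leq_add2l | rewrite leq_addr orbT].
- by rewrite eK; apply/eqP/setP => k; rewrite !inE GJB // !ffunE.
Qed.

Lemma F4 p q N (J : {set 'I_p.-1}) (K : {set 'I_q.-1}) v :
  Qset J K v -> Theta (@Phi p q N v) = v.
Proof.
case: v => g z; rewrite /Qset /= => /and3P[mg sh].
rewrite Gr // => /and3P[/forallP hD _ _].
have hD' : forall i, Dz z i -> i \in cutsf g := fun i h => implyP (hD i) h.
set s := sN (Phi (g, z)).
have sE : forall x, s x = g (z x) by move=> x; rewrite /s /sN sI_Phi.
have key1 : forall k i, lexo s k i -> (z k < z i)%N.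
  move=> k i; rewrite /lexo !sE => /orP[h|/andP[/eqP h ki]].
    rewrite ltnNge; apply/negP => zik; have := monoP mg zik; lia.
  case: (boolP ((k < p)%N == (i < p)%N)) => e.
    by rewrite (SIr sh (eqP e)).
  have kp : (k < p)%N by lia.
  have ip : (p <= i)%N by lia.
  rewrite ltnNge leq_eqVlt; apply/negP => /orP[/eqP/val_inj/perm_inj e'|zik].
    by move: ki; rewrite e' ltnn.
  have nA : ~~ isA z (z i) by rewrite /isA permK -leqNgt.
  have yA : isA z (z k) by rewrite /isA permK.
  have := Lbl mg hD' nA yA zik; lia.
have key : forall k i, lexo s k i = (z k < z i)%N.
  move=> k i; apply/idP/idP; first exact: key1.
  move=> h; case: (eqVneq k i) => [e|ne]; first by move: h; rewrite e ltnn.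
  by case/orP: (lexo_total s ne) => // h'; have := key1 _ _ h'; lia.
have e : rperm s = z.
  apply/permP => i; apply: val_inj; rewrite /= rpermE /rank.
  have -> : [set k | lexo s k i] = z @^-1: [set y : 'I_(p + q) | (0 <= y) && (y < z i)].
    by apply/setP => k; rewrite !inE key.
  by rewrite card_preimset ?cardI ?subn0 //; [apply: ltnW | apply: perm_inj].
rewrite /Theta -/s e; congr pair; apply/ffunP => x.
by rewrite ffunE sI_Phi /= permKV.
Qed.

Lemma F2 p q N (J : {set 'I_p.-1}) (K : {set 'I_q.-1}) u :
  Pset J K u -> Qset J K (@Theta p q N u).
Proof.
case: u => g1 g2; rewrite /Pset /= => /and4P[m1 /eqP c1 m2 /eqP c2].
set u := (g1, g2); set s := sN u; set z := rperm s.
rewrite /Theta -/s -/z /Qset /=.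
set g := [ffun x => sI u ((z^-1)%g x)].
have gz : forall i, g (z i) = sI u i by move=> i; rewrite ffunE permK.
have zlt : forall i j, (z i < z j)%N = lexo s i j by move=> i j; rewrite rperm_lt.
have sle : forall x y : 'I_(p + q), (x <= y)%N -> (y < p)%N || (p <= x)%N -> (s x <= s y)%N.
  move=> x y xy; case: (ltnP y p) => hy /= h.
    have hx : (x < p)%N by lia.
    have -> : x = lshift q (Ordinal hx) by apply: val_inj.
    have -> : y = lshift q (Ordinal hy) by apply: val_inj.
    by rewrite /s /sN !sI_l; apply: monoP.
  have hx' : (x - p < q)%N by have := ltn_ord x; lia.
  have hy' : (y - p < q)%N by have := ltn_ord y; lia.
  have -> : x = rshift p (Ordinal hx') by apply: val_inj => /=; lia.
  have -> : y = rshift p (Ordinal hy') by apply: val_inj => /=; lia.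
  by rewrite /s /sN !sI_r; apply: monoP => /=; lia.
have mg : mono g.
  apply/forallP => x; apply/forallP => y; apply/implyP => xy.
  rewrite !ffunE; case: (eqVneq x y) => [->//|ne].
  have xy' : (z ((z^-1)%g x) < z ((z^-1)%g y))%N.
    rewrite !permKV; have : (x : nat) != y by apply/eqP => /val_inj /eqP; rewrite (negbTE ne).
    lia.
  move: xy'; rewrite zlt /lexo => /orP[h|/andP[/eqP h _]].
    by apply: ltnW.
  by rewrite /s /sN in h; rewrite h.
have sh : shuffle_perm z.
  apply/forallP => i; apply/implyP => hi.
  have := sle (pos_lo i) (pos_hi i) (ltac:(rewrite /=; lia)) (ltac:(rewrite /=; lia)).
  rewrite zlt /lexo /=; lia.
have hD : forall i, Dz z i -> i \in cutsf g.
  move=> i /andP[hl hh]; rewrite inE -{1}(permKV z (pos_lo i)) -{1}(permKV z (pos_hi i)) !gz.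
  set b := (z^-1)%g (pos_lo i); set a := (z^-1)%g (pos_hi i).
  have hb : (p <= b)%N by rewrite leqNgt; exact: hl.
  have ha : (a < p)%N by exact: hh.
  have : (z b < z a)%N by rewrite /a /b !permKV /=.
  rewrite zlt /lexo => /orP[h|/andP[_ h]]; [exact: h | lia].
rewrite mg sh /= Gr //; apply/and3P; split.
- by apply/forallP => i; apply/implyP; apply: hD.
- by rewrite -c1; apply/eqP/setP => j; rewrite !inE GJA // !gz !sI_l.
- by rewrite -c2; apply/eqP/setP => k; rewrite !inE GJB // !gz !sI_r.
Qed.

Local Open Scope ring_scope.
Lemma bij_sum (R : comNzRingType) p q N (X : 'I_N -> R) (J : {set 'I_p.-1}) (K : {set 'I_q.-1}) :
  \sum_(u | Pset J K u) ((\prod_x X (u.1 x)) * (\prod_x X (u.2 x))) =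
  \sum_(v | Qset J K v) \prod_x X (v.1 x).
Proof.
rewrite (reindex_onto (@Phi p q N) (@Theta p q N)) /=; last by move=> u _; exact: F1.
apply: eq_big => [v|v _].
- apply/idP/idP.
    by move=> /andP[hP /eqP e]; rewrite -e; exact: F2.
  by move=> hQ; rewrite F3 // (F4 hQ) eqxx.
- symmetry; rewrite (reindex_inj (@perm_inj _ v.2)) big_split_ord /=.
  by congr (_ * _); apply: eq_bigr => i _; rewrite ffunE.
Qed.
Local Close Scope ring_scope.



Lemma Lc (s : seq nat) x t : sorted ltn s -> (t < size s)%N ->
  (t < count (fun v => v <= x) s)%N = (nth 0 s t <= x)%N.
Proof.
elim: s t => [|h s IH] t //= hs ht.
have ss : sorted ltn s := path_sorted hs.
have al : all (ltn h) s := order_path_min ltn_trans hs.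
case: (leqP h x) => hx /=.
  case: t ht => [|t] ht //=; rewrite add1n ltnS IH //.
have c0 : count (fun v => v <= x) s = 0.
  apply/eqP; rewrite -leqn0 leqNgt -has_count; apply/hasPn => v vs.
  have := allP al v vs; rewrite /= => hv; lia.
rewrite c0; case: t ht => [|t] ht /=; first lia.
have := allP al _ (mem_nth 0 (ltac:(rewrite ltnS in ht; exact: ht))); rewrite /=; lia.
Qed.

Definition sJ n (J : {set 'I_n.-1}) : seq nat := sort leq [seq (val j).+1 | j <- enum J].

Lemma sJ_sorted n (J : {set 'I_n.-1}) : sorted ltn (sJ J).
Proof.
rewrite ltn_sorted_uniq_leq sort_uniq sort_sorted ?andbT; last exact: leq_total.
rewrite map_inj_uniq ?enum_uniq // => a b [] /val_inj //.
Qed.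

Lemma sJ_size n (J : {set 'I_n.-1}) : size (sJ J) = #|J|.
Proof. by rewrite size_sort size_map cardE. Qed.

Lemma sJ_mem n (J : {set 'I_n.-1}) (j : 'I_n.-1) : (j.+1 \in sJ J) = (j \in J).
Proof.
rewrite mem_sort; apply/mapP/idP => [[j' hj' /eqP]|hj].
  by rewrite eqSS => /eqP /val_inj ->; rewrite -mem_enum.
by exists j; rewrite ?mem_enum.
Qed.

Lemma sJ_bound n (J : {set 'I_n.-1}) v : v \in sJ J -> (0 < v)%N && (v < n)%N.
Proof.
rewrite mem_sort => /mapP[j _ ->] /=; have := ltn_ord j.
by case: n J j => [|n] J j //=; lia.
Qed.

Definition bJ n (J : {set 'I_n.-1}) (x : nat) := count (fun v => v <= x) (sJ J).

Lemma bJ_mono n (J : {set 'I_n.-1}) x y : (x <= y)%N -> (bJ J x <= bJ J y)%N.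
Proof. move=> xy; apply: sub_count => v /= h; lia. Qed.

Lemma bJ_le n (J : {set 'I_n.-1}) x : (bJ J x <= #|J|)%N.
Proof. by rewrite -sJ_size count_size. Qed.

Lemma bJ_S n (J : {set 'I_n.-1}) (j : 'I_n.-1) : bJ J j.+1 = (bJ J j + (j \in J))%N.
Proof.
rewrite /bJ -sJ_mem -(count_uniq_mem _ (sorted_uniq ltn_trans ltnn (sJ_sorted J))).
set s := sJ J.
have e : count (fun v => v <= j.+1) s = count (predU (fun v => v <= j) (pred1 j.+1)) s.
  by apply: eq_count => v /=; rewrite leq_eqVlt ltnS orbC.
have e0 : count (predI (fun v => v <= j) (pred1 j.+1)) s = 0.
  by apply/eqP; rewrite -leqn0 leqNgt -has_count; apply/hasPn => v _ /=; apply/negP => /andP[h /eqP e']; rewrite e' ltnn in h.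
have := count_predUI (fun v => v <= j) (pred1 j.+1) s.
rewrite -e e0 addn0 => ->; by [].
Qed.

Definition ltO N (a b : 'I_N) := (a < b)%N.

Lemma enum_sorted N (I : {set 'I_N}) : sorted (@ltO N) (enum I).
Proof.
rewrite /enum_mem; apply: sorted_filter; first by move=> a b c; apply: ltn_trans.
rewrite -enumT; have : sorted ltn (map val (enum 'I_N)) by rewrite val_enum_ord iota_ltn_sorted.
by rewrite sorted_map.
Qed.


Lemma nth_lt N (I : {set 'I_N}) d i j : (i < size (enum I))%N -> (j < size (enum I))%N ->
  (nth d (enum I) i < nth d (enum I) j)%N = (i < j)%N.
Proof.
move=> hi hj.
have H : forall a b, (a < size (enum I))%N -> (b < size (enum I))%N -> (a < b)%N ->
    (nth d (enum I) a < nth d (enum I) b)%N.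
  move=> a b ha hb ab; apply: (@sorted_ltn_nth _ (@ltO N)) => //.
    by move=> x y z; apply: ltn_trans.
  exact: enum_sorted.
apply/idP/idP => [h|]; last exact: H.
rewrite ltnNge; apply/negP; rewrite leq_eqVlt => /orP[/eqP e|ji].
  by move: h; rewrite e ltnn.
by have := H _ _ hj hi ji; lia.
Qed.

Definition Gam n N (J : {set 'I_n.-1}) (I : {set 'I_N.+1}) : {ffun 'I_n -> 'I_N.+1} :=
  [ffun x : 'I_n => nth ord0 (enum I) (bJ J x)].

Lemma bJ_lt n N (J : {set 'I_n.-1}) (I : {set 'I_N}) x : #|I| = #|J|.+1 -> (bJ J x < size (enum I))%N.
Proof. by move=> h; rewrite -cardE h ltnS bJ_le. Qed.

Lemma G1 n N (J : {set 'I_n.-1}) (I : {set 'I_N.+1}) : #|I| = #|J|.+1 -> mono (Gam J I).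
Proof.
move=> hI; apply/forallP => x; apply/forallP => y; apply/implyP => xy; rewrite !ffunE.
have := bJ_mono J xy; rewrite leq_eqVlt => /orP[/eqP ->//|h].
by apply: ltnW; rewrite nth_lt ?bJ_lt.
Qed.

Lemma G2 n N (J : {set 'I_n.-1}) (I : {set 'I_N.+1}) : #|I| = #|J|.+1 -> cutsf (Gam J I) = J.
Proof.
move=> hI; apply/setP => j; rewrite inE !ffunE nth_lt ?bJ_lt //=.
rewrite bJ_S; case: (j \in J); lia.
Qed.

Lemma bJ_nth n (J : {set 'I_n.-1}) t : (t < #|J|)%N -> bJ J (nth 0 (sJ J) t) = t.+1.
Proof.
move=> ht; have hs := sJ_sorted J; rewrite -sJ_size in ht.
apply/eqP; rewrite eqn_leq; apply/andP; split; last by rewrite (Lc _ hs ht).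
case: (ltnP t.+1 (size (sJ J))) => h; last by rewrite /bJ; have := count_size (fun v => v <= nth 0 (sJ J) t) (sJ J); lia.
rewrite leqNgt (Lc _ hs h) -ltnNge.
apply: (@sorted_ltn_nth _ ltn) => //.
exact: ltn_trans.
Qed.

Lemma bJ0 n (J : {set 'I_n.-1}) : bJ J 0 = 0.
Proof.
apply/eqP; rewrite -leqn0 leqNgt -has_count; apply/hasPn => v /sJ_bound /=; lia.
Qed.

Lemma G3 n N (J : {set 'I_n.-1}) (I : {set 'I_N.+1}) : (0 < n)%N -> #|I| = #|J|.+1 ->
  [set Gam J I x | x : 'I_n] = I.
Proof.
move=> n0 hI; apply/setP => v; apply/imsetP/idP.
  by move=> [x _ ->]; rewrite ffunE -mem_enum mem_nth ?bJ_lt.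
move=> vI; set t := index v (enum I).
have ht : (t < #|J|.+1)%N by rewrite -hI cardE index_mem mem_enum.
have hv0 : nth ord0 (enum I) t = v by rewrite /t nth_index // mem_enum.
case E: t ht hv0 => [|t0] ht hv0.
  by exists (Ordinal n0) => //; rewrite ffunE /= bJ0 hv0.
have hv : (nth 0 (sJ J) t0 < n)%N.
  by have /andP[] := sJ_bound (mem_nth 0 (ltac:(rewrite sJ_size; lia) : (t0 < size (sJ J))%N)).
exists (Ordinal hv) => //; rewrite ffunE /= bJ_nth ?hv0 //; lia.
Qed.


Lemma le0 n N (g h : {ffun 'I_n.+1 -> 'I_N}) : mono h ->
  [set g x | x : 'I_n.+1] = [set h x | x : 'I_n.+1] -> (h ord0 <= g ord0)%N.
Proof.
move=> mh ei; have : g ord0 \in [set h x | x : 'I_n.+1] by rewrite -ei imset_f.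
by case/imsetP => y _ ->; apply: monoP.
Qed.

Lemma Ustep n N (g h : {ffun 'I_n.+1 -> 'I_N}) : mono h ->
  [set g x | x : 'I_n.+1] = [set h x | x : 'I_n.+1] -> forall j : 'I_n.+1.-1,
  j \in cutsf g -> g (pos_lo j) = h (pos_lo j) -> (h (pos_hi j) <= g (pos_hi j))%N.
Proof.
move=> mh ei j; rewrite inE => jc e.
have : g (pos_hi j) \in [set h x | x : 'I_n.+1] by rewrite -ei imset_f.
case/imsetP => y _ ey; rewrite ey; apply: monoP => //=.
rewrite ltnNge; apply/negP => yl.
have := monoP mh (yl : (y <= pos_lo j)%N); rewrite -e -ey; lia.
Qed.

Lemma U n N (g h : {ffun 'I_n.+1 -> 'I_N}) : mono g -> mono h -> cutsf g = cutsf h ->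
  [set g x | x : 'I_n.+1] = [set h x | x : 'I_n.+1] -> g = h.
Proof.
move=> mg mh ec ei.
suff H : forall m (hm : (m < n.+1)%N), g (Ordinal hm) = h (Ordinal hm).
  by apply/ffunP => -[m hm]; apply: H.
elim=> [|m IH] hm.
  have e0 : Ordinal hm = ord0 by apply: val_inj.
  rewrite e0; apply: val_inj; apply/eqP; rewrite eqn_leq !le0 //.
have hj : (m < n)%N by lia.
pose j : 'I_n.+1.-1 := Ordinal hj.
have hl : pos_lo j = Ordinal (ltnW hm) by apply: val_inj.
have hh : pos_hi j = Ordinal hm by apply: val_inj.
have IH' := IH (ltnW hm); rewrite -hl in IH'.
case: (boolP (j \in cutsf g)) => jc.
  have jc' : j \in cutsf h by rewrite -ec.
  apply: val_inj; apply/eqP; rewrite eqn_leq -hh.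
  by rewrite (Ustep mh ei jc IH') (Ustep mg (esym ei) jc' (esym IH')).
have jc' : j \notin cutsf h by rewrite -ec.
move: jc jc'; rewrite !inE -!leqNgt => c1 c2.
have c3 : (g (pos_lo j) <= g (pos_hi j))%N by apply: monoP => /=.
have c4 : (h (pos_lo j) <= h (pos_hi j))%N by apply: monoP => /=.
apply: val_inj; rewrite /= -hh; move: c1 c2 c3 c4; rewrite IH'; lia.
Qed.

Lemma Cim n N (g : {ffun 'I_n.+1 -> 'I_N}) : mono g ->
  #|[set g x | x : 'I_n.+1]| = #|cutsf g|.+1.
Proof.
move=> mg; set J := cutsf g.
have e : [set g x | x : 'I_n.+1] = g ord0 |: [set g (pos_hi j) | j in J].
  apply/setP => v; apply/imsetP/setU1P.
  - move=> [x _ ->]; case: x => m hm.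
    elim: m hm => [|m IH] hm.
      by left; congr (g _); apply: val_inj.
    have hj : (m < n)%N by lia.
    pose j : 'I_n.+1.-1 := Ordinal hj.
    have hl : pos_lo j = Ordinal (ltnW hm) by apply: val_inj.
    have hh : pos_hi j = Ordinal hm by apply: val_inj.
    case: (boolP (j \in J)) => jJ.
      by right; apply/imsetP; exists j; rewrite ?hh.
    have c3 : (g (pos_lo j) <= g (pos_hi j))%N by apply: monoP => /=.
    move: jJ; rewrite inE -leqNgt => c1.
    have eq : g (Ordinal hm) = g (Ordinal (ltnW hm)).
      by apply: val_inj; rewrite -hh -hl; apply/eqP; rewrite eqn_leq c1 c3.
    by rewrite eq; apply: IH.
  - case=> [->|]; first by exists ord0.
    by case/imsetP => j _ ->; exists (pos_hi j).
rewrite e cardsU1 card_in_imset.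
  have -> : g ord0 \notin [set g (pos_hi j) | j in J].
    apply/imsetP => -[j jJ ej]; move: jJ; rewrite inE -ej => h.
    have := monoP mg (leq0n (pos_lo j) : (ord0 <= pos_lo j)%N); lia.
  by rewrite add1n.
have key : forall j j' : 'I_n.+1.-1, j' \in J -> (j < j')%N -> (g (pos_hi j) < g (pos_hi j'))%N.
  move=> j j' jJ jj'; move: jJ; rewrite inE => h.
  have := monoP mg (_ : (pos_hi j <= pos_lo j')%N); rewrite /=.
  have := monoP mg (_ : (pos_lo j' <= pos_hi j')%N); rewrite /=.
  move=> a b; have := a (leqnSn _); have := b jj'; lia.
move=> j j' jJ j'J /= e'; apply/eqP; apply/negPn/negP => ne.
have : (j : nat) != j' by apply: contra ne => /eqP /val_inj ->.
case: (ltngtP j j') => // h _.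
  by have := key _ _ j'J h; rewrite e' ltnn.
by have := key _ _ jJ h; rewrite e' ltnn.
Qed.


Lemma compo_size n (J : {set 'I_n.-1}) : size (compo J) = #|J|.+1.
Proof. by rewrite /compo size_pairmap size_rcons -/(sJ J) sJ_size. Qed.

Lemma Ccard n (J : {set 'I_n.-1}) (t : nat) : (t < #|J|.+1)%N ->
  #|[set x : 'I_n | bJ J x == t]| = nth 0 (compo J) t.
Proof.
move=> ht; rewrite /compo -/(sJ J) (nth_pairmap 0) ?size_rcons ?sJ_size //.
set s := sJ J.
have hs : sorted ltn s := sJ_sorted J; have ss : size s = #|J| := sJ_size J.
set hi := nth 0 (rcons s n) t; set lo := nth 0 (0 :: rcons s n) t.
have hin : (hi <= n)%N.
  rewrite /hi nth_rcons; case: ifP => h; last by rewrite ss; case: ifP => //; lia.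
  by have /andP[_ h'] := sJ_bound (mem_nth 0 h); apply: ltnW.
rewrite -(cardI lo hin); apply: eq_card => x; rewrite !inE.
have e1 : (t <= bJ J x)%N = (lo <= x)%N.
  rewrite /lo; case E: t => [|t'] //=.
  have ht' : (t' < size s)%N by rewrite ss; lia.
  by rewrite nth_rcons ht' Lc.
have e2 : (bJ J x < t.+1)%N = (x < hi)%N.
  rewrite /hi nth_rcons; case: ifP => h.
    by rewrite ltnS leqNgt Lc // -ltnNge.
  have -> : t = size s by lia.
  by rewrite eqxx ltn_ord ltnS /bJ count_size.
by rewrite eqn_leq -ltnS e2 -e1 andbC.
Qed.

Import GRing.Theory.
Local Open Scope ring_scope.

Lemma G4 (R : comNzRingType) n N (J : {set 'I_n.-1}) (I : {set 'I_N.+1}) (X : 'I_N.+1 -> R) :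
  #|I| = #|J|.+1 ->
  \prod_(x <- zip (enum I) (compo J)) X x.1 ^+ x.2 = \prod_(x : 'I_n) X (Gam J I x).
Proof.
move=> hI.
have sz := compo_size J.
have se : size (enum I) = #|J|.+1 by rewrite -cardE.
rewrite (big_nth (ord0, 0%N)) size_zip se sz minnn big_mkord.
have hb : forall x : 'I_n, (bJ J x < #|J|.+1)%N by move=> x; rewrite ltnS bJ_le.
rewrite (partition_big (fun x => Ordinal (hb x)) predT) //=.
apply: eq_bigr => t _; rewrite nth_zip ?se ?sz //=.
rewrite (eq_bigr (fun _ => X (nth ord0 (enum I) t))) => [|x /eqP <-]; last by rewrite ffunE.
rewrite prodr_const -(Ccard (ltn_ord t)); congr (_ ^+ _).
by apply: eq_card => x; rewrite !inE.
Qed.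

Lemma Mq_sum (R : comNzRingType) n N (J : {set 'I_n.-1}) (X : 'I_N -> R) : (0 < n)%N ->
  \sum_(I : {set 'I_N} | #|I| == size (compo J)) \prod_(x <- zip (enum I) (compo J)) X x.1 ^+ x.2
  = \sum_(g : {ffun 'I_n -> 'I_N} | mono g && (cutsf g == J)) \prod_x X (g x).
Proof.
move=> n0; have sz := compo_size J.
case: N X => [|N] X.
  rewrite !big_pred0 // => [g|I].
    by case: (g (Ordinal n0)).
  apply/negbTE; rewrite sz; have := max_card I; rewrite card_ord; lia.
case: n J n0 sz => [//|n] J n0 sz.
rewrite (eq_bigr (fun I => \prod_x X (Gam J I x))) => [|I /eqP hI]; last by rewrite G4 // -sz.
have inj : {in [set I : {set 'I_N.+1} | #|I| == size (compo J)] &, injective (Gam J)}.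
  move=> I I'; rewrite !inE sz => /eqP h /eqP h' e.
  by rewrite -(G3 n0 h) -(G3 n0 h') e.
rewrite (eq_bigl (fun I => I \in [set I : {set 'I_N.+1} | #|I| == size (compo J)])); last by move=> I; rewrite inE.
rewrite -(big_imset (fun g : {ffun 'I_n.+1 -> 'I_N.+1} => \prod_x X (g x)) inj) /=.
apply: eq_bigl => g; apply/imsetP/andP.
  by move=> [I]; rewrite inE sz => /eqP hI ->; rewrite G1 // G2.
move=> [mg /eqP cg]; exists [set g x | x : 'I_n.+1].
  by rewrite inE Cim // cg sz.
have hI : #|[set g x | x : 'I_n.+1]| = #|J|.+1 by rewrite Cim // cg.
apply: U => //; first exact: G1.
  by rewrite G2.
by rewrite G3.
Qed.


Local Open Scope ring_scope.

Theorem mainTheorem14 (p q : nat) (J : {set 'I_p.-1}) (K : {set 'I_q.-1}) :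
  (0 < p)%N -> (0 < q)%N ->
  forall N : nat,
    Mqsym N J * Mqsym N K =
    \sum_(R : {set 'I_(p + q).-1}) (count_zeta J K R)%:R * Mqsym N R.
Proof.
move=> p0 q0 N.
pose X := fun i : 'I_N => ('X_i : {mpoly int[N]}).
have MqE : forall n (L : {set 'I_n.-1}), (0 < n)%N -> Mqsym N L =
    \sum_(g : {ffun 'I_n -> 'I_N} | mono g && (cutsf g == L)) \prod_x X (g x).
  by move=> n L n0; rewrite /Mqsym -(Mq_sum L X n0).
rewrite !MqE // big_distrlr /= pair_big /=.
rewrite (eq_bigl (Pset J K)); last by move=> u; rewrite /Pset !andbA.
rewrite bij_sum.
rewrite (eq_bigl (fun v => mono v.1 && (shuffle_perm v.2 && greatest_is v.2 (cutsf v.1) J K))); last first.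
  by move=> v; rewrite /Qset.
rewrite -(pair_big_dep (fun g => mono g) (fun g z => shuffle_perm z && greatest_is z (cutsf g) J K) (fun g z => \prod_x X (g x))) /=.
transitivity (\sum_(g | mono g) (count_zeta J K (cutsf g))%:R * \prod_x X (g x)).
  apply: eq_bigr => g _.
  by rewrite /count_zeta -sum1dep_card natr_sum mulr_suml; apply: eq_bigr => z _; rewrite mul1r.
rewrite (partition_big (fun g => cutsf g) predT) //=.
apply: eq_bigr => R _; rewrite MqE ?addn_gt0 ?p0 // big_distrr /=.
by apply: eq_bigr => g /andP[_ /eqP ->].
Qed.
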